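(* Let $(M^n,g,k)$ be an initial data set with $M$ spin, let $\phi\in\overline{\mathcal S}(M)$ and $p\in M$. If $N(\phi)=|X(\phi)|$ at $p$, or if $N(\phi)=|Y(\phi)|$ at $p$, then at $p$: $$N(\phi)\,\omega(\phi)=X(\phi)\wedge Y(\phi),\qquad X(\phi)\perp Y(\phi),\qquad N(\phi)^2-|X(\phi)|^2-|Y(\phi)|^2+\tfrac12|\omega(\phi)|^2=0 .$$
   Context: Spinor conventions. For a Riemannian spin manifold $(M^n,g)$, $\mathcal S$ is the complex spinor bundle with Hermitian inner product $\langle\cdot,\cdot\rangle$ (complex linear in the first slot); Clifford multiplication by tangent vectors satisfies $vw+wv=-2g(v,w)$ and vectors act skew-Hermitian. Set $\overline{\mathcal S}=\mathcal S\oplus\mathcal S$ with direct-sum inner product, where a tangent vector $e_l$ and an extra element $e_0$ act by $e_l(\psi_1,\psi_2)=(e_l\psi_1,-e_l\psi_2)$, $e_0(\psi_1,\psi_2)=(\psi_2,\psi_1)$. With $\{e_i\}_{i=1}^n$ an orthonormal frame and summation over repeated indices, for $\phi\in\overline{\mathcal S}$: $N(\phi)=|\phi|^2$, $X(\phi)=\langle e_ie_0\phi,\phi\rangle e_i$, $Y(\phi)=\langle\mathbf i e_i\phi,\phi\rangle e_i$, $\omega_{ij}(\phi)=\operatorname{Im}\langle e_ie_je_0\phi,\phi\rangle$; these are real. For vectors $V,W$, $(V\wedge W)_{ij}=V_iW_j-V_jW_i$, and $|\omega|^2=\sum_{i,j}\omega_{ij}^2$. *)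

(* Defs.v *)
(* Pointwise (fibrewise) linear algebra at the point p. *)
From HB Require Import structures.
From mathcomp Require Import all_boot all_order all_algebra.
Set Implicit Arguments. Unset Strict Implicit. Unset Printing Implicit Defensive.
Import Order.TTheory GRing.Theory Num.Theory.
Local Open Scope ring_scope.

Section SpinorAlgebra.
Variables (C : numClosedFieldType) (m n : nat).

(* Fibre S_p of the spinor bundle, modelled as C^m with its Hermitian product,
   complex linear in the first slot. *)
Definition herm (u v : 'cV[C]_m) : C := \sum_(k < m) u k 0 * (v k 0)^*.

Definition Sbar := ('cV[C]_m * 'cV[C]_m)%type.
Definition hermbar (p q : Sbar) : C := herm p.1 q.1 + herm p.2 q.2.
Definition scalebar (a : C) (p : Sbar) : Sbar := (a *: p.1, a *: p.2).

(* Clifford structure on S_p for an orthonormal frame e_1..e_n of T_pM: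
   E i is Clifford multiplication by e_i. *)
Definition clifford_frame (E : 'I_n -> 'M[C]_m) : Prop :=
  (forall i j : 'I_n, E i *m E j + E j *m E i = ((-2) * (i == j)%:R)%:M) /\
  (forall i : 'I_n, map_mx (fun z => z^*) (E i)^T = - E i).

Definition ebar (E : 'I_n -> 'M[C]_m) (l : 'I_n) (p : Sbar) : Sbar :=
  (E l *m p.1, - (E l *m p.2)).
Definition e0 (p : Sbar) : Sbar := (p.2, p.1).

(* The quantities N, X, Y, omega (real-valued, computed in C). *)
Definition Nq (phi : Sbar) : C := hermbar phi phi.
Definition Xq (E : 'I_n -> 'M[C]_m) (phi : Sbar) (i : 'I_n) : C :=
  hermbar (ebar E i (e0 phi)) phi.
Definition Yq (E : 'I_n -> 'M[C]_m) (phi : Sbar) (i : 'I_n) : C :=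
  hermbar (scalebar 'i (ebar E i phi)) phi.
Definition omegaq (E : 'I_n -> 'M[C]_m) (phi : Sbar) (i j : 'I_n) : C :=
  'Im (hermbar (ebar E i (ebar E j (e0 phi))) phi).

Definition vdot (V W : 'I_n -> C) : C := \sum_(i < n) V i * W i.
Definition vnorm (V : 'I_n -> C) : C := sqrtC (vdot V V).
Definition wedge (V W : 'I_n -> C) (i j : 'I_n) : C := V i * W j - V j * W i.
Definition formnorm2 (w : 'I_n -> 'I_n -> C) : C :=
  \sum_(i < n) \sum_(j < n) w i j ^+ 2.

End SpinorAlgebra.

(* Main.v *)
Require Import Defs.
From HB Require Import structures.
From mathcomp Require Import all_boot all_order all_algebra.
From mathcomp Require Import ring.
Set Implicit Arguments. Unset Strict Implicit. Unset Printing Implicit Defensive.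
Import Order.TTheory GRing.Theory Num.Theory.
Local Open Scope ring_scope.

Section Herm.
Variables (C : numClosedFieldType) (m : nat).
Definition adj (M : 'M[C]_m) : 'M[C]_m := map_mx (fun z => z^*) M^T.
Local Notation herm := (@herm C m).

Lemma hermE (u v : 'cV[C]_m) : herm u v = (map_mx (fun z => z^*) v^T *m u) 0 0.
Proof. rewrite /herm !mxE; apply: eq_bigr => k _; by rewrite !mxE mulrC. Qed.

Lemma adj_mul (M : 'M[C]_m) (v : 'cV[C]_m) :
  map_mx (fun z => z^*) (M *m v)^T = map_mx (fun z => z^*) v^T *m adj M.
Proof. rewrite /adj trmx_mul; exact: (map_mxM (@Num.conj C)). Qed.

Lemma adjK M : adj (adj M) = M.
Proof. apply/matrixP => i j; by rewrite !mxE conjCK. Qed.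

Lemma herm_adj (M : 'M[C]_m) u v : herm (M *m u) v = herm u (adj M *m v).
Proof. by rewrite !hermE adj_mul adjK mulmxA. Qed.


Lemma herm_adjr (M : 'M[C]_m) u v : herm u (M *m v) = herm (adj M *m u) v.
Proof. by rewrite herm_adj adjK. Qed.

Lemma hermC u v : herm v u = (herm u v)^*.
Proof. rewrite /herm rmorph_sum; apply: eq_bigr => k _; by rewrite rmorphM /= conjCK mulrC. Qed.

Lemma hermDl u w v : herm (u + w) v = herm u v + herm w v.
Proof. rewrite /herm -big_split; apply: eq_bigr => k _; by rewrite mxE mulrDl. Qed.
Lemma hermNl u v : herm (- u) v = - herm u v.
Proof. rewrite /herm -sumrN; apply: eq_bigr => k _; by rewrite mxE mulNr. Qed.
Lemma hermZl c u v : herm (c *: u) v = c * herm u v.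
Proof. rewrite /herm mulr_sumr; apply: eq_bigr => k _; by rewrite mxE mulrA. Qed.
Lemma hermBl u w v : herm (u - w) v = herm u v - herm w v.
Proof. by rewrite hermDl hermNl. Qed.
Lemma herm_suml (I : finType) (f : I -> 'cV[C]_m) v :
  herm (\sum_i f i) v = \sum_i herm (f i) v.
Proof.
rewrite /herm exchange_big /=; apply: eq_bigr => k _.
by rewrite summxE mulr_suml.
Qed.
Lemma hermDr u w v : herm v (u + w) = herm v u + herm v w.
Proof. by rewrite hermC hermDl rmorphD /= -!hermC. Qed.
Lemma hermNr u v : herm v (- u) = - herm v u.
Proof. by rewrite hermC hermNl rmorphN /= -hermC. Qed.
Lemma hermZr c u v : herm v (c *: u) = c^* * herm v u.
Proof. by rewrite hermC hermZl rmorphM /= -hermC. Qed.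
Lemma hermBr u w v : herm v (u - w) = herm v u - herm v w.
Proof. by rewrite hermDr hermNr. Qed.
Lemma herm0l v : herm 0 v = 0.
Proof. by rewrite -(scale0r 0) hermZl mul0r. Qed.
Lemma herm0r v : herm v 0 = 0.
Proof. by rewrite hermC herm0l conjC0. Qed.

Lemma herm_ge0 u : 0 <= herm u u.
Proof. apply: sumr_ge0 => k _; by rewrite -normCK exprn_ge0. Qed.
Lemma herm_real u : (herm u u)^* = herm u u.
Proof. by rewrite -hermC. Qed.
Lemma herm_eq0 u : herm u u = 0 -> u = 0.
Proof.
move=> /eqP; rewrite psumr_eq0 => [/allP H|k _]; last by rewrite -normCK exprn_ge0.
apply/matrixP => k j; rewrite (ord1 j) mxE.
have := H k (mem_index_enum _); rewrite -normCK expf_eq0 /= normr_eq0.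
by move/eqP.
Qed.


Lemma cs_eq p1 y1 p2 y2 (N : C) : N^* = N ->
  herm p1 p1 + herm p2 p2 = N -> herm y1 y1 + herm y2 y2 = N ->
  herm p1 y1 + herm p2 y2 = N -> p1 = y1 /\ p2 = y2.
Proof.
move=> hN hp hy hs.
have hs' : (herm p1 y1)^* + (herm p2 y2)^* = N by rewrite -rmorphD /= hs.
have h0 : herm (p1 - y1) (p1 - y1) + herm (p2 - y2) (p2 - y2) = 0.
  rewrite !hermBl !hermBr.
  have -> : herm p1 p1 - herm p1 y1 - (herm y1 p1 - herm y1 y1) +
    (herm p2 p2 - herm p2 y2 - (herm y2 p2 - herm y2 y2)) =
    (herm p1 p1 + herm p2 p2) + (herm y1 y1 + herm y2 y2)
    - (herm p1 y1 + herm p2 y2) - (herm y1 p1 + herm y2 p2) by ring.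
  by rewrite hp hy hs (hermC p1 y1) (hermC p2 y2) hs' addrK subrr.
move/eqP: h0; rewrite paddr_eq0 ?herm_ge0 // => /andP[/eqP/herm_eq0 h1 /eqP/herm_eq0 h2].
by split; apply/eqP; rewrite -subr_eq0 ?h1 ?h2.
Qed.
End Herm.
Section Cliff.
Variables (C : numClosedFieldType) (m n : nat) (E : 'I_n -> 'M[C]_m).
Hypothesis hAC : forall i j : 'I_n, E i *m E j + E j *m E i = ((-2) * (i == j)%:R)%:M.
Hypothesis hadj : forall i, adj (E i) = - E i.

Definition Fm (w : 'I_n -> C) : 'M[C]_m := \sum_i w i *: E i.

Lemma Fm_mul w (x : 'cV[C]_m) : Fm w *m x = \sum_i w i *: (E i *m x).
Proof. rewrite /Fm mulmx_suml; apply: eq_bigr => i _; by rewrite scalemxAl. Qed.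

Lemma adjF w : (forall i, (w i)^* = w i) -> adj (Fm w) = - Fm w.
Proof.
move=> hw; apply/matrixP => k l.
rewrite /Fm /adj !mxE !summxE rmorph_sum -sumrN; apply: eq_bigr => i _.
have := congr1 (fun M : 'M[C]_m => M k l) (hadj i); rewrite /adj !mxE => H.
by rewrite rmorphM /= hw H mulrN.
Qed.

Lemma anticomm w i : Fm w *m E i + E i *m Fm w = (-2 * w i)%:M.
Proof.
rewrite /Fm mulmx_suml mulmx_sumr -big_split /=.
rewrite (eq_bigr (fun k => ((-2) * (k == i)%:R * w k)%:M)); last first.
  move=> k _; by rewrite -scalemxAl -scalemxAr -scalerDr hAC scale_scalar_mx mulrC.
rewrite -raddf_sum /= (bigD1 i) //= big1 ?addr0 ?eqxx ?mulr1 //.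
by move=> k /negbTE ->; rewrite mulr0 mul0r.
Qed.

Lemma anticommv w i (x : 'cV[C]_m) :
  Fm w *m (E i *m x) = - (2 * w i) *: x - E i *m (Fm w *m x).
Proof.
apply/eqP; rewrite eq_sym subr_eq mulmxA mulmxA -mulmxDl.
by rewrite anticomm mul_scalar_mx mulNr.
Qed.

Lemma Fsq w : (forall i, (w i)^* = w i) -> \sum_i w i ^+ 2 = 1 ->
  forall x : 'cV[C]_m, Fm w *m (Fm w *m x) = - x.
Proof.
move=> hw h1 x.
have h2 : (Fm w *m (Fm w *m x)) *+ 2 = (- x) *+ 2.
  rewrite mulr2n {1}Fm_mul {2}(Fm_mul w x) mulmx_sumr -big_split /=.
  rewrite (eq_bigr (fun i => (- 2 * w i ^+ 2) *: x)); last first.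
    move=> i _; rewrite -scalemxAr.
    rewrite anticommv scalerBr addrC subrK scalerA.
    by congr (_ *: _); ring.
  rewrite -(scaler_suml x) -mulr_sumr h1 mulr1.
  by rewrite -scaler_nat scalerN scaleNr.
have := congr1 (fun y => 2^-1 *: y) h2; rewrite /= -!scaler_nat !scalerA.
by rewrite mulVf ?pnatr_eq0 // !scale1r.
Qed.

Lemma FEF w : (forall i, (w i)^* = w i) -> \sum_i w i ^+ 2 = 1 ->
  forall i (x : 'cV[C]_m),
  Fm w *m (E i *m (Fm w *m x)) = E i *m x - (2 * w i) *: (Fm w *m x).
Proof.
move=> hw h1 i x; rewrite anticommv Fsq // mulmxN opprK scaleNr addrC.
by [].
Qed.

Lemma FEE w i j (x : 'cV[C]_m) :
  Fm w *m (E i *m (E j *m x)) =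
  E i *m (E j *m (Fm w *m x)) - (2 * w i) *: (E j *m x) + (2 * w j) *: (E i *m x).
Proof.
rewrite anticommv anticommv mulmxBr -scalemxAr scaleNr.
rewrite opprB scaleNr opprK.
by rewrite addrCA addrA.
Qed.
End Cliff.
Section Main.
Variables (C : numClosedFieldType) (m n : nat) (E : 'I_n -> 'M[C]_m).
Hypothesis hAC : forall i j : 'I_n, E i *m E j + E j *m E i = ((-2) * (i == j)%:R)%:M.
Hypothesis hadj : forall i, adj (E i) = - E i.
Local Notation F w := (Fm E w).

Lemma Xq_beta (a b : 'cV[C]_m) i :
  Xq E (a, b) i = herm (E i *m b) a + (herm (E i *m b) a)^*.
Proof.
rewrite /Xq /hermbar /ebar /e0 /=.
by rewrite hermNl (herm_adj (E i) a b) hadj mulNmx hermNr opprK (hermC (E i *m b) a).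
Qed.

Lemma Xq_real (a b : 'cV[C]_m) i : (Xq E (a, b) i)^* = Xq E (a, b) i.
Proof. by rewrite Xq_beta rmorphD /= conjCK addrC. Qed.

Lemma cE_conj (x : 'cV[C]_m) i : (herm (E i *m x) x)^* = - herm (E i *m x) x.
Proof. by rewrite -hermC herm_adjr hadj mulNmx hermNl. Qed.

Lemma Yq_c (a b : 'cV[C]_m) i :
  Yq E (a, b) i = 'i * herm (E i *m a) a - 'i * herm (E i *m b) b.
Proof. by rewrite /Yq /hermbar /ebar /scalebar /= !hermZl hermNl mulrN. Qed.

Lemma Yq_real (a b : 'cV[C]_m) i : (Yq E (a, b) i)^* = Yq E (a, b) i.
Proof.
rewrite Yq_c rmorphB !rmorphM /= !cE_conj conjCi.
by rewrite !mulrNN.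
Qed.

Lemma Nq_ab (a b : 'cV[C]_m) : Nq (a, b) = herm a a + herm b b.
Proof. by []. Qed.

Lemma Nq_real (a b : 'cV[C]_m) : (Nq (a, b))^* = Nq (a, b).
Proof. by rewrite Nq_ab rmorphD /= !herm_real. Qed.

Lemma herm_F w (x y : 'cV[C]_m) :
  herm (F w *m x) y = \sum_i w i * herm (E i *m x) y.
Proof. rewrite Fm_mul herm_suml; apply: eq_bigr => i _; by rewrite hermZl. Qed.

Lemma sumX w (a b : 'cV[C]_m) :
  \sum_i w i * Xq E (a, b) i = herm (F w *m b) a + herm (- (F w *m a)) b.
Proof.
rewrite hermNl !herm_F -sumrN -big_split; apply: eq_bigr => i _.
by rewrite /Xq /hermbar /ebar /e0 /= hermNl mulrBr.
Qed.

Lemma sumY w (a b : 'cV[C]_m) :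
  \sum_i w i * Yq E (a, b) i =
  herm ('i *: (F w *m a)) a + herm ('i *: - (F w *m b)) b.
Proof.
rewrite !hermZl hermNl !herm_F mulrN !mulr_sumr -sumrN -big_split.
apply: eq_bigr => i _; rewrite Yq_c /=; ring.
Qed.


Section CaseX.
Variable w : 'I_n -> C.
Hypothesis hw : forall i, (w i)^* = w i.
Hypothesis h1 : \sum_i w i ^+ 2 = 1.

Lemma caseX_Y (a : 'cV[C]_m) i :
  Yq E (a, - (F w *m a)) i =
  'i * (2 * herm (E i *m a) a - 2 * w i * \sum_k w k * herm (E k *m a) a).
Proof.
rewrite Yq_c mulmxN hermNl hermNr opprK.
rewrite (herm_adjr (F w) (E i *m (F w *m a)) a) adjF // mulNmx.
rewrite (FEF hAC) // hermNl hermBl hermZl herm_F.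
rewrite /=; ring.
Qed.

Lemma caseX_om (a : 'cV[C]_m) i j :
  omegaq E (a, - (F w *m a)) i j =
  'Im (2 * w j * herm (E i *m a) a - 2 * w i * herm (E j *m a) a).
Proof.
rewrite /omegaq /hermbar /ebar /e0 /=.
congr ('Im _).
rewrite !mulmxN opprK hermNl hermNr.
rewrite (herm_adjr (F w) (E i *m (E j *m a)) a) adjF // mulNmx hermNl opprK.
rewrite (FEE hAC) !hermDl hermNl !hermZl.
rewrite /=; ring.
Qed.

End CaseX.


Lemma Funit w : (forall i, (w i)^* = w i) -> \sum_i w i ^+ 2 = 1 ->
  forall x : 'cV[C]_m, herm (F w *m x) (F w *m x) = herm x x.
Proof.
move=> hw h1 x.
by rewrite (herm_adj (F w)) adjF // mulNmx (Fsq hAC) // opprK.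
Qed.

Lemma herm_ii (x : 'cV[C]_m) : herm ('i *: x) ('i *: x) = herm x x.
Proof.
rewrite hermZl hermZr conjCi mulrA mulrN -expr2 sqrCi.
by rewrite opprK mul1r.
Qed.

Lemma solve_i (W z : C) : - ('i * W) = 'i * W - 2 * z -> W = - 'i * z.
Proof.
move=> H.
have h : 'i * W = z.
  have : (z - 'i * W) *+ 2 = - ('i * W) - ('i * W - 2 * z) by rewrite /=; ring.
  rewrite -H subrr => /eqP; rewrite mulrn_eq0 /= subr_eq0 => /eqP ->.
  by [].
by rewrite -h mulrA mulNr -expr2 sqrCi opprK mul1r.
Qed.

Lemma ImNi (r : C) : r^* = r -> 'Im (- 'i * r) = - r.
Proof.
move=> hr; rewrite mulNr -mulrN ImMil.
apply/Creal_ReP; rewrite CrealE rmorphN /= hr //.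
Qed.

Section CaseY.
Variable w : 'I_n -> C.
Hypothesis hw : forall i, (w i)^* = w i.
Hypothesis h1 : \sum_i w i ^+ 2 = 1.
Variables (a b : 'cV[C]_m).
Hypothesis hya : 'i *: (F w *m a) = a.
Hypothesis hyb : 'i *: - (F w *m b) = b.

Lemma Fa : F w *m a = - 'i *: a.
Proof. by rewrite -{2}hya scalerA mulNr -expr2 sqrCi opprK scale1r. Qed.
Lemma Fb : F w *m b = 'i *: b.
Proof. by rewrite -{2}hyb !scalerN scalerA -expr2 sqrCi scaleN1r opprK. Qed.

Lemma hba : herm b a = 0.
Proof.
have e1 : herm (F w *m b) a = 'i * herm b a by rewrite Fb hermZl.
have e2 : herm (F w *m b) a = - ('i * herm b a).
  by rewrite herm_adj adjF // mulNmx hermNr Fa hermZr rmorphN /= conjCi opprK.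
have : ('i * herm b a) *+ 2 = 0.
  by rewrite mulr2n -{1}e1 e2 addNr.
move/eqP; rewrite mulrn_eq0 /= mulf_eq0 => /orP[|/eqP //].
by rewrite (negbTE (neq0Ci C)).
Qed.

Lemma sum_wX : \sum_i w i * Xq E (a, b) i = 0.
Proof.
rewrite sumX Fb Fa scaleNr opprK !hermZl hba (hermC b a) hba conjC0.
by rewrite mulr0 addr0.
Qed.

Lemma WY i j : herm (E i *m (E j *m b)) a =
  - 'i * (w i * herm (E j *m b) a - w j * herm (E i *m b) a).
Proof.
apply: solve_i.
have e1 : herm (E i *m (E j *m (F w *m b))) a = 'i * herm (E i *m (E j *m b)) a.
  by rewrite Fb -!scalemxAr hermZl.
have e2 : herm (F w *m (E i *m (E j *m b))) a = - ('i * herm (E i *m (E j *m b)) a).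
  by rewrite herm_adj adjF // mulNmx hermNr Fa hermZr rmorphN /= conjCi opprK.
rewrite -e2 (FEE hAC) !hermDl hermNl !hermZl e1.
rewrite /=; ring.
Qed.

Lemma caseY_om i j : omegaq E (a, b) i j = w j * Xq E (a, b) i - w i * Xq E (a, b) j.
Proof.
rewrite /omegaq /hermbar /ebar /e0 /= mulmxN opprK.
have eB : herm (E i *m (E j *m a)) b = (herm (E j *m (E i *m b)) a)^*.
  rewrite (herm_adj (E i)) hadj mulNmx hermNr.
  rewrite (herm_adj (E j)) hadj mulNmx hermNr opprK.
  by rewrite (hermC (E j *m (E i *m b)) a).
rewrite eB !WY !Xq_beta.
rewrite rmorphM rmorphB !rmorphM /= rmorphN /= conjCi !hw.
set bi := herm (E i *m b) a; set bj := herm (E j *m b) a.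
have -> : - 'i * (w i * bj - w j * bi) + - - 'i * (w j * bi^* - w i * bj^*) =
  - 'i * (w i * (bj + bj^*) - w j * (bi + bi^*)) by rewrite /=; ring.
rewrite ImNi; first by rewrite /=; ring.
by rewrite rmorphB !rmorphM /= !rmorphD /= !conjCK !hw /= (addrC bj) (addrC bi).
Qed.

End CaseY.

End Main.
Section Alg.
Variables (C : numClosedFieldType) (n : nat).

Lemma sum2 (f g : 'I_n -> C) :
  \sum_i \sum_j f i * g j = (\sum_i f i) * (\sum_j g j).
Proof. rewrite mulr_suml; apply: eq_bigr => i _; by rewrite mulr_sumr. Qed.

Lemma lagrange (a b : 'I_n -> C) :
  \sum_i \sum_j (a j * b i - a i * b j) ^+ 2 =
  2 * (\sum_i a i ^+ 2) * (\sum_i b i ^+ 2) - 2 * (\sum_i a i * b i) ^+ 2.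
Proof.
rewrite (eq_bigr (fun i => \sum_j (b i ^+ 2 * a j ^+ 2) + \sum_j (a i ^+ 2 * b j ^+ 2)
   - \sum_j (2 * (a i * b i)) * (a j * b j))); last first.
  move=> i _; rewrite -big_split -sumrB /=; apply: eq_bigr => j _; ring.
rewrite sumrB big_split /= !sum2 -mulr_sumr.
rewrite /=; ring.
Qed.

End Alg.
Theorem mainTheorem8 (C : numClosedFieldType) (m n : nat)
    (E : 'I_n -> 'M[C]_m) (phi : Sbar C m) :
  clifford_frame E ->
  (Nq phi = vnorm (Xq E phi) \/ Nq phi = vnorm (Yq E phi)) ->
  [/\ (forall i j : 'I_n,
         Nq phi * omegaq E phi i j = wedge (Xq E phi) (Yq E phi) i j),
      vdot (Xq E phi) (Yq E phi) = 0
    & Nq phi ^+ 2 - vdot (Xq E phi) (Xq E phi) - vdot (Yq E phi) (Yq E phi)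
        + 2^-1 * formnorm2 (omegaq E phi) = 0].
Proof.
case=> hAC hadj0.
have hadj : forall i, adj (E i) = - E i by [].
case: phi => a b.
have [N0|N0] := eqVneq (Nq (a, b)) 0.
  move: N0; rewrite Nq_ab => /eqP; rewrite paddr_eq0 ?herm_ge0 //.
  move=> /andP[/eqP/herm_eq0 -> /eqP/herm_eq0 ->] _.
  have hX0 : forall i, Xq E (0, 0) i = 0.
    by move=> i; rewrite /Xq /hermbar /= !herm0r addr0.
  have hY0 : forall i, Yq E (0, 0) i = 0.
    by move=> i; rewrite /Yq /hermbar /= !herm0r addr0.
  have hO0 : forall i j, omegaq E (0, 0) i j = 0.
    by move=> i j; rewrite /omegaq /hermbar /= !herm0r addr0 ImE rmorph0 subrr mulr0 mul0r.
  have hN0 : Nq (0 : 'cV[C]_m, 0 : 'cV[C]_m) = 0 by rewrite Nq_ab herm0r addr0.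
  rewrite herm0r addr0; split.
  - by move=> i j; rewrite /wedge !hX0 !mul0r subrr.
  - by rewrite /vdot big1 // => i _; rewrite hX0 mul0r.
  - rewrite /vdot /formnorm2 !big1 ?subrr ?mulr0 ?expr0n ?addr0 ?subr0 //.
    + by move=> i _; rewrite big1 // => j _; rewrite hO0 expr0n.
    + by move=> i _; rewrite hY0 mul0r.
    + by move=> i _; rewrite hX0 mul0r.
move=> [hX|hY].
- have hN2 : Nq (a, b) ^+ 2 = vdot (Xq E (a, b)) (Xq E (a, b)).
    by rewrite {1}hX /vnorm sqrtCK.
  pose u := fun i => Xq E (a, b) i / Nq (a, b).
  have hXu : forall i, Xq E (a, b) i = u i * Nq (a, b) by move=> i; rewrite /u divfK.
  have hu : forall i, (u i)^* = u i.
    by move=> i; rewrite /u fmorph_div /= (Xq_real hadj) (Nq_real a b).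
  have hu1 : \sum_i u i ^+ 2 = 1.
    rewrite (eq_bigr (fun i => Xq E (a, b) i * Xq E (a, b) i / Nq (a, b) ^+ 2)); last first.
      by move=> i _; rewrite /u expr_div_n expr2.
    by rewrite -mulr_suml -/(vdot _ _) -hN2 divff // expf_neq0.
  have [_ hb] : Fm E u *m b = a /\ - (Fm E u *m a) = b.
    apply: (cs_eq (N := Nq (a, b))).
    + exact: Nq_real.
    + by rewrite hermNl hermNr opprK !(Funit hAC hadj hu hu1) addrC.
    + by [].
    + rewrite -sumX (eq_bigr (fun i => Xq E (a, b) i * Xq E (a, b) i / Nq (a, b))); last first.
        by move=> i _; rewrite /u mulrC mulrA.
      by rewrite -mulr_suml -/(vdot _ _) -hN2 expr2 mulfK.
  pose g := fun k => 'Im (herm (E k *m a) a).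
  pose d := \sum_k u k * g k.
  have hc : forall k, herm (E k *m a) a = 'i * g k.
    move=> k; rewrite {1}[herm _ _]Crect.
    have -> : 'Re (herm (E k *m a) a) = 0.
      by rewrite ReE (cE_conj hadj) subrr mul0r.
    by rewrite add0r.
  have hYi : forall i, Yq E (a, b) i = - (2 * g i - 2 * u i * d).
    move=> i; rewrite -hb (caseX_Y hAC hadj hu hu1) !hc.
    rewrite (eq_bigr (fun k => 'i * (u k * g k))); last first.
      by move=> k _; rewrite hc mulrCA.
    rewrite -mulr_sumr -/d.
    have -> : 'i * (2 * ('i * g i) - 2 * u i * ('i * d)) =
      'i ^+ 2 * (2 * g i - 2 * u i * d) by rewrite /=; ring.
    by rewrite sqrCi mulN1r.
  have hOm : forall i j, omegaq E (a, b) i j = 2 * (u j * g i - u i * g j).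
    move=> i j; rewrite -hb (caseX_om hAC hadj hu) !hc.
    have -> : 2 * u j * ('i * g i) - 2 * u i * ('i * g j) =
      'i * (2 * (u j * g i - u i * g j)) by rewrite /=; ring.
    have ur : forall k, u k \is Num.real by move=> k; rewrite CrealE hu.
    rewrite ImMil; apply/Creal_ReP.
    by rewrite rpredM ?rpred_nat // rpredB // rpredM ?ur ?Creal_Im.
  split.
  + by move=> i j; rewrite hOm /wedge !hXu !hYi /=; ring.
  + rewrite /vdot (eq_bigr (fun i => 2 * Nq (a, b) * d * u i ^+ 2 - 2 * Nq (a, b) * (u i * g i))); last first.
      by move=> i _; rewrite hXu hYi /=; ring.
    by rewrite sumrB -!mulr_sumr hu1 -/d mulr1 subrr.
  + rewrite -hN2 /formnorm2.
    rewrite (eq_bigr (fun i => 4 * \sum_j (u j * g i - u i * g j) ^+ 2)); last first.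
      move=> i _; rewrite mulr_sumr; apply: eq_bigr => j _; rewrite hOm /=; ring.
    rewrite -mulr_sumr lagrange hu1 -/d.
    rewrite /vdot (eq_bigr (fun i => 4 * g i ^+ 2 - 8 * d * (u i * g i) + 4 * d ^+ 2 * u i ^+ 2)); last first.
      by move=> i _; rewrite hYi /=; ring.
    rewrite big_split sumrB /= -!mulr_sumr hu1 -/d.
    by rewrite /=; field.
- have hN2 : Nq (a, b) ^+ 2 = vdot (Yq E (a, b)) (Yq E (a, b)).
    by rewrite {1}hY /vnorm sqrtCK.
  pose v := fun i => Yq E (a, b) i / Nq (a, b).
  have hYv : forall i, Yq E (a, b) i = v i * Nq (a, b) by move=> i; rewrite /v divfK.
  have hv : forall i, (v i)^* = v i.
    by move=> i; rewrite /v fmorph_div /= (Yq_real hadj) (Nq_real a b).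
  have hv1 : \sum_i v i ^+ 2 = 1.
    rewrite (eq_bigr (fun i => Yq E (a, b) i * Yq E (a, b) i / Nq (a, b) ^+ 2)); last first.
      by move=> i _; rewrite /v expr_div_n expr2.
    by rewrite -mulr_suml -/(vdot _ _) -hN2 divff // expf_neq0.
  have [hya hyb] : 'i *: (Fm E v *m a) = a /\ 'i *: - (Fm E v *m b) = b.
    apply: (cs_eq (N := Nq (a, b))).
    + exact: Nq_real.
    + by rewrite !herm_ii hermNl hermNr opprK !(Funit hAC hadj hv hv1).
    + by [].
    + rewrite -sumY (eq_bigr (fun i => Yq E (a, b) i * Yq E (a, b) i / Nq (a, b))); last first.
        by move=> i _; rewrite /v mulrC mulrA.
      by rewrite -mulr_suml -/(vdot _ _) -hN2 expr2 mulfK.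
  have hXv := sum_wX hadj hv hya hyb.
  have hOm := caseY_om hAC hadj hv hya hyb.
  split.
  + by move=> i j; rewrite hOm /wedge !hYv /=; ring.
  + rewrite /vdot (eq_bigr (fun i => Nq (a, b) * (v i * Xq E (a, b) i))); last first.
      by move=> i _; rewrite hYv /=; ring.
    by rewrite -mulr_sumr hXv mulr0.
  + have eXX : vdot (Xq E (a, b)) (Xq E (a, b)) = \sum_(i < n) Xq E (a, b) i ^+ 2.
      by rewrite /vdot; apply: eq_bigr => k _ /=; rewrite expr2.
    have eYY : vdot (Yq E (a, b)) (Yq E (a, b)) = Nq (a, b) ^+ 2.
      rewrite /vdot (eq_bigr (fun i => Nq (a, b) ^+ 2 * v i ^+ 2)); last first.
        by move=> i _; rewrite hYv /=; ring.
      by rewrite -mulr_sumr hv1 mulr1.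
    rewrite /formnorm2.
    rewrite (eq_bigr (fun i => \sum_j (v j * Xq E (a, b) i - v i * Xq E (a, b) j) ^+ 2)); last first.
      by move=> i _; apply: eq_bigr => j _; rewrite hOm.
    rewrite eXX eYY.
    rewrite lagrange hv1 hXv.
    by rewrite /=; field.
Qed.
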